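(* Let $\{A_i\}_{i\in I}$ be a family of groups and $F=*_{i\in I}A_i$ their free product. Then for every $j\in\mathbb{N}$, $\mathrm{Tor}_j(F)$ equals the normal closure in $F$ of $\bigcup_{i\in I}\mathrm{Tor}_j(A_i)$, and the natural map $*_{i\in I}\big(A_i/\mathrm{Tor}_j(A_i)\big)\to F/\mathrm{Tor}_j(F)$ is an isomorphism. Furthermore $\mathrm{Tor}_\infty(F)$ equals the normal closure in $F$ of $\bigcup_{i\in I}\mathrm{Tor}_\infty(A_i)$, and the natural map $*_{i\in I}\big(A_i/\mathrm{Tor}_\infty(A_i)\big)\to F/\mathrm{Tor}_\infty(F)$ is an isomorphism.
   Context: For a group $G$, define $\mathrm{Tor}_0(G)=\{e\}$ and inductively $\mathrm{Tor}_{i+1}(G)$ to be the normal closure in $G$ of $\{g\in G : g\,\mathrm{Tor}_i(G)\text{ has finite order in } G/\mathrm{Tor}_i(G)\}$; set $\mathrm{Tor}_\infty(G)=\bigcup_{i\in\mathbb{N}}\mathrm{Tor}_i(G)$. Each $A_i$ is regarded as a subgroup of $F$ via the natural embedding. *)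

(* Defs.v *)
From Stdlib Require Import Arith.

Record group := Group {
  carrier :> Type;
  gmul : carrier -> carrier -> carrier;
  gone : carrier;
  ginv : carrier -> carrier;
  gmulA : forall x y z, gmul x (gmul y z) = gmul (gmul x y) z;
  gmul1l : forall x, gmul gone x = x;
  gmul1r : forall x, gmul x gone = x;
  gmulVl : forall x, gmul (ginv x) x = gone;
  gmulVr : forall x, gmul x (ginv x) = gone
}.
Arguments gmul {g}.
Arguments gone {g}.
Arguments ginv {g}.

Record hom (G H : group) := Hom {
  hom_fun :> G -> H;
  hom_mul : forall x y, hom_fun (gmul x y) = gmul (hom_fun x) (hom_fun y)
}.
Arguments hom_fun {G H}.

Fixpoint gpow {G : group} (x : G) (n : nat) : G :=
  match n with 0 => gone | S m => gmul x (gpow x m) end.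

Definition is_normal_subgroup (G : group) (N : G -> Prop) : Prop :=
  N gone /\
  (forall x y, N x -> N y -> N (gmul x y)) /\
  (forall x, N x -> N (ginv x)) /\
  (forall g x, N x -> N (gmul (gmul g x) (ginv g))).

Definition normal_closure (G : group) (S : G -> Prop) : G -> Prop :=
  fun x => forall N, is_normal_subgroup G N -> (forall s, S s -> N s) -> N x.

(* Tor_0 = {e}; Tor_{i+1} = normal closure of the elements whose image in
   G/Tor_i has finite order, i.e. g^n \in Tor_i for some n >= 1. *)
Fixpoint Tor (G : group) (i : nat) : G -> Prop :=
  match i with
  | 0 => fun x => x = gone
  | S k => normal_closure G (fun g => exists n, 0 < n /\ Tor G k (gpow g n))
  end.

Definition Tor_inf (G : group) : G -> Prop := fun x => exists i, Tor G i x.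

Definition IsFreeProduct {I : Type} (A : I -> group) (F : group)
  (iota : forall i, hom (A i) F) : Prop :=
  forall (H : group) (f : forall i, hom (A i) H),
    exists phi : hom F H,
      (forall i a, phi (iota i a) = f i a) /\
      (forall psi : hom F H, (forall i a, psi (iota i a) = f i a) ->
         forall x, psi x = phi x).

Definition IsQuotient (G : group) (N : G -> Prop) (Q : group) (pi : hom G Q) : Prop :=
  (forall q, exists x, pi x = q) /\ (forall x, pi x = gone <-> N x).

Definition bijective_hom {G H : group} (f : hom G H) : Prop :=
  (forall x y, f x = f y -> x = y) /\ (forall y, exists x, f x = y).

Definition union_image {I : Type} {A : I -> group} {F : group}
  (iota : forall i, hom (A i) F) (T : forall i, A i -> Prop) : F -> Prop :=
  fun y => exists i a, T i a /\ y = iota i a.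

Definition free_product_compat {I : Type} (A : I -> group) (F : group)
  (iota : forall i, hom (A i) F) (T : forall G : group, G -> Prop) : Prop :=
  (forall x, T F x <-> normal_closure F (union_image iota (fun i => T (A i))) x) /\
  (forall (Q : I -> group) (pi : forall i, hom (A i) (Q i))
          (P : group) (kappa : forall i, hom (Q i) P)
          (R : group) (rho : hom F R) (phi : hom P R),
     (forall i, IsQuotient (A i) (T (A i)) (Q i) (pi i)) ->
     IsFreeProduct Q P kappa ->
     IsQuotient F (T F) R rho ->
     (forall i a, phi (kappa i (pi i a)) = rho (iota i a)) ->
     bijective_hom phi).

(* Main.v *)
Require Import Defs.
From Stdlib Require Import Arith Lia List.
From Stdlib Require Import ClassicalEpsilon FunctionalExtensionality PropExtensionality ProofIrrelevance.

Arguments gmulA {g}.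
Arguments gmul1l {g}.
Arguments gmul1r {g}.
Arguments gmulVl {g}.
Arguments gmulVr {g}.
Arguments hom_mul {G H}.



Section GroupBasics.
Variable G : group.
Implicit Types x y z : G.

Lemma mul_left_cancel x y z : gmul x y = gmul x z -> y = z.
Proof.
  intro H. rewrite <- (gmul1l y), <- (gmul1l z), <- (gmulVl x), <- !gmulA, H. reflexivity.
Qed.

Lemma inv_unique x y : gmul x y = gone -> ginv x = y.
Proof.
  intro H. apply (mul_left_cancel x). rewrite gmulVr, H. reflexivity.
Qed.

Lemma inv_inv x : ginv (ginv x) = x.
Proof. apply inv_unique. apply gmulVl. Qed.

Lemma inv_mul x y : ginv (gmul x y) = gmul (ginv y) (ginv x).
Proof.
  apply inv_unique. rewrite gmulA, <- (gmulA x y), gmulVr, gmul1r, gmulVr. reflexivity.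
Qed.

Lemma inv_one : ginv (@gone G) = gone.
Proof. apply inv_unique. apply gmul1l. Qed.

Lemma gpow_add x m n : gpow x (m + n) = gmul (gpow x m) (gpow x n).
Proof.
  induction m; simpl. - rewrite gmul1l; auto. - rewrite IHm, gmulA. auto.
Qed.

Lemma gpow_conj h x n :
  gpow (gmul (gmul h x) (ginv h)) n = gmul (gmul h (gpow x n)) (ginv h).
Proof.
  induction n; simpl.
  - rewrite gmul1r, gmulVr. auto.
  - rewrite IHn. rewrite !gmulA. f_equal. rewrite <- !gmulA. f_equal. f_equal.
    rewrite !gmulA, gmulVl, gmul1l. auto.
Qed.

Lemma gpow_one n : gpow (@gone G) n = gone.
Proof. induction n; simpl; auto. rewrite IHn, gmul1l. auto. Qed.

End GroupBasics.

Section HomBasics.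
Variables G H : group.
Variable f : hom G H.

Lemma hom_one : f gone = gone.
Proof.
  apply (mul_left_cancel _ (f gone)). rewrite <- hom_mul, !gmul1r. auto.
Qed.

Lemma hom_inv x : f (ginv x) = ginv (f x).
Proof.
  symmetry. apply inv_unique. rewrite <- hom_mul, gmulVr. apply hom_one.
Qed.

Lemma hom_pow x n : f (gpow x n) = gpow (f x) n.
Proof. induction n; simpl. apply hom_one. rewrite hom_mul, IHn. auto. Qed.
End HomBasics.

Definition hom_id (G : group) : hom G G := Hom G G (fun x => x) (fun x y => eq_refl).
Definition hom_comp {G H K : group} (g : hom H K) (f : hom G H) : hom G K.
Proof.
  refine (Hom G K (fun x => g (f x)) _). intros. rewrite !hom_mul. auto.
Defined.

Section Normal.
Variable G : group.

Lemma ncl_normal S : is_normal_subgroup G (normal_closure G S).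
Proof.
  unfold normal_closure. repeat split.
  - intros N HN _. destruct HN as (H1&_). exact H1.
  - intros x y Hx Hy N HN HS. pose proof HN as HN'. destruct HN' as (_&H2&_). apply H2; [apply Hx|apply Hy]; auto.
  - intros x Hx N HN HS. pose proof HN as HN'. destruct HN' as (_&_&H3&_). apply H3; apply Hx; auto.
  - intros g x Hx N HN HS. pose proof HN as HN'. destruct HN' as (_&_&_&H4). apply H4; apply Hx; auto.
Qed.

Lemma ncl_incl (S : G -> Prop) x : S x -> normal_closure G S x.
Proof. intros Hx N _ HS. auto. Qed.

Lemma ncl_min (S N : G -> Prop) : is_normal_subgroup G N -> (forall s, S s -> N s) ->
  forall x, normal_closure G S x -> N x.
Proof. intros HN HS x Hx. apply Hx; auto. Qed.

Lemma ncl_mono (S T : G -> Prop) : (forall s, S s -> T s) ->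
  forall x, normal_closure G S x -> normal_closure G T x.
Proof.
  intros HST. apply ncl_min. apply ncl_normal. intros s Hs. apply ncl_incl. auto.
Qed.

Lemma normal_conj' N (HN : is_normal_subgroup G N) g x :
  N x -> N (gmul (gmul (ginv g) x) g).
Proof.
  intro Hx. destruct HN as (_&_&_&H4). rewrite <- (inv_inv G g) at 2. auto.
Qed.

Lemma normal_mul_inv N (HN : is_normal_subgroup G N) x y :
  N x -> N y -> N (gmul (ginv x) y).
Proof. intros. destruct HN as (_&H2&H3&_). auto. Qed.

Lemma trivial_normal : is_normal_subgroup G (fun x => x = gone).
Proof.
  repeat split; intros; subst.
  - apply gmul1l.
  - apply inv_one.
  - rewrite gmul1r, gmulVr. auto.
Qed.
End Normal.

Lemma preimage_normal (G H : group) (f : hom G H) (N : H -> Prop) :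
  is_normal_subgroup H N -> is_normal_subgroup G (fun x => N (f x)).
Proof.
  intros (H1&H2&H3&H4). repeat split.
  - rewrite hom_one. auto.
  - intros. rewrite hom_mul. auto.
  - intros. rewrite hom_inv. auto.
  - intros. rewrite !hom_mul, hom_inv. auto.
Qed.


Lemma Tor_normal G j : is_normal_subgroup G (Tor G j).
Proof. destruct j; simpl. apply trivial_normal. apply ncl_normal. Qed.

Lemma Tor_succ G j x : Tor G j x -> Tor G (S j) x.
Proof. intro H. simpl. apply ncl_incl. exists 1. split. lia. simpl. rewrite gmul1r. auto. Qed.

Lemma Tor_mono G j k x : j <= k -> Tor G j x -> Tor G k x.
Proof. induction 1; auto. intro. apply Tor_succ; auto. Qed.

Lemma Tor_hom G H (f : hom G H) j x : Tor G j x -> Tor H j (f x).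
Proof.
  revert x. induction j; simpl; intros x Hx.
  - subst. apply hom_one.
  - refine (ncl_min G _ (fun x => normal_closure H (fun g : H => exists n : nat, 0 < n /\ Tor H j (gpow g n)) (f x)) _ _ x Hx).
    + apply (preimage_normal _ _ f). apply ncl_normal.
    + intros s [n [Hn Hs]]. apply ncl_incl. exists n. split; auto. rewrite <- hom_pow. auto.
Qed.

Lemma Tor_inf_normal G : is_normal_subgroup G (Tor_inf G).
Proof.
  unfold Tor_inf. repeat split.
  - exists 0. simpl. auto.
  - intros x y [j Hx] [k Hy]. exists (j + k). apply Tor_normal; [apply (Tor_mono G j)|apply (Tor_mono G k)]; auto; lia.
  - intros x [j Hx]. exists j. apply Tor_normal; auto.
  - intros g x [j Hx]. exists j. apply Tor_normal; auto.
Qed.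

Inductive Gen {I : Type} {A : I -> group} {F : group} (iota : forall i, hom (A i) F) : F -> Prop :=
| Gen1 : Gen iota gone
| GenS : forall i a x, Gen iota x -> Gen iota (gmul (iota i a) x).

Section Generation.
Variables (I : Type) (A : I -> group) (F : group) (iota : forall i, hom (A i) F).

Lemma Gen_mul x y : Gen iota x -> Gen iota y -> Gen iota (gmul x y).
Proof. induction 1; intros. rewrite gmul1l; auto. rewrite <- gmulA. constructor; auto. Qed.

Lemma Gen_inv x : Gen iota x -> Gen iota (ginv x).
Proof.
  induction 1. rewrite inv_one. constructor.
  rewrite inv_mul. apply Gen_mul; auto. rewrite <- hom_inv, <- (gmul1r (iota i (ginv a))).
  constructor. constructor.
Qed.

Definition GenT := { x : F | Gen iota x }.
Definition GenGroup : group.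
Proof.
  refine (Group GenT (fun x y => exist _ (gmul (proj1_sig x) (proj1_sig y)) (Gen_mul _ _ (proj2_sig x) (proj2_sig y)))
    (exist _ gone (Gen1 _)) (fun x => exist _ (ginv (proj1_sig x)) (Gen_inv _ (proj2_sig x))) _ _ _ _ _);
  intros; apply eq_sig_hprop; try (intros; apply proof_irrelevance); simpl.
  apply gmulA. apply gmul1l. apply gmul1r. apply gmulVl. apply gmulVr.
Defined.

Lemma Gen_iota i a : Gen iota (iota i a).
Proof. rewrite <- (gmul1r (iota i a)). constructor. constructor. Qed.

Definition gen_hom i : hom (A i) GenGroup.
Proof.
  refine (Hom (A i) GenGroup (fun a => exist _ (iota i a) (Gen_iota i a)) _).
  intros. apply eq_sig_hprop. intros; apply proof_irrelevance. simpl. apply hom_mul.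
Defined.

Definition incl_hom : hom GenGroup F := Hom GenGroup F (fun x => proj1_sig x) (fun x y => eq_refl).

Lemma generation : IsFreeProduct A F iota -> forall x, Gen iota x.
Proof.
  intros HF x.
  destruct (HF GenGroup gen_hom) as [phi [Hphi _]].
  destruct (HF F iota) as [psi [_ Hu]].
  assert (E1 : forall x, hom_comp incl_hom phi x = psi x).
  { apply Hu. intros. simpl. rewrite Hphi. auto. }
  assert (E2 : forall x, hom_id F x = psi x). { apply Hu. auto. }
  specialize (E1 x). specialize (E2 x). simpl in *. rewrite <- E2 in E1. rewrite <- E1.
  apply (proj2_sig (phi x)).
Qed.

Lemma gen_ind : IsFreeProduct A F iota -> forall P : F -> Prop, P gone ->
  (forall i a x, P x -> P (gmul (iota i a) x)) -> forall x, P x.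
Proof.
  intros HF P H1 H2 x. induction (generation HF x); auto.
Qed.

Lemma hom_ext (H : group) (f g : hom F H) : IsFreeProduct A F iota ->
  (forall i a, f (iota i a) = g (iota i a)) -> forall x, f x = g x.
Proof.
  intros HF E. destruct (HF H (fun i => hom_comp f (iota i))) as [phi [_ Hu]].
  intro x. rewrite (Hu f), (Hu g); auto. intros; simpl; auto.
Qed.
End Generation.


Lemma part2 I (A : I -> group) F (iota : forall i, hom (A i) F)
  (NA : forall i, A i -> Prop) (NF : F -> Prop) :
  IsFreeProduct A F iota ->
  (forall x, NF x <-> normal_closure F (union_image iota NA) x) ->
  forall (Q : I -> group) (pi : forall i, hom (A i) (Q i))
          (P : group) (kappa : forall i, hom (Q i) P)
          (R : group) (rho : hom F R) (phi : hom P R),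
     (forall i, IsQuotient (A i) (NA i) (Q i) (pi i)) ->
     IsFreeProduct Q P kappa ->
     IsQuotient F NF R rho ->
     (forall i a, phi (kappa i (pi i a)) = rho (iota i a)) ->
     bijective_hom phi.
Proof.
  intros HF HNF Q pi P kappa R rho phi HQ HP [Rsurj Rker] Hphi.
  destruct (HF P (fun i => hom_comp (kappa i) (pi i))) as [psi [Hpsi _]].
  assert (E : forall x, phi (psi x) = rho x).
  { intro x. apply (hom_ext _ _ _ iota R (hom_comp phi psi) rho HF).
    intros. simpl. rewrite Hpsi. simpl. auto. }
  assert (Psurj : forall p, exists x, psi x = p).
  { apply (gen_ind _ _ _ kappa HP).
    - exists gone. apply hom_one.
    - intros i q p [x Hx]. destruct (proj1 (HQ i) q) as [a Ha].
      exists (gmul (iota i a) x). rewrite hom_mul, Hpsi, Hx. simpl. rewrite Ha. auto. }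
  assert (Kill : forall x, NF x -> psi x = gone).
  { intros x Hx. apply HNF in Hx. revert x Hx.
    apply (ncl_min F _ (fun x => psi x = gone)).
    - apply (preimage_normal _ _ psi (fun y => y = gone)). apply trivial_normal.
    - intros s [i [a [Ha ->]]]. rewrite Hpsi. simpl.
      apply (proj2 (HQ i)) in Ha. rewrite Ha. apply hom_one. }
  split.
  - intros p q Hpq. destruct (Psurj p) as [x <-]. destruct (Psurj q) as [y <-].
    rewrite !E in Hpq.
    assert (H1 : rho (gmul (ginv x) y) = gone).
    { rewrite hom_mul, hom_inv, Hpq. apply gmulVl. }
    apply Rker, Kill in H1. rewrite hom_mul, hom_inv in H1.
    apply (mul_left_cancel _ (ginv (psi x))). rewrite H1, gmulVl. auto.
  - intro r. destruct (Rsurj r) as [x <-]. exists (psi x). apply E.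
Qed.


Lemma mulKV (G : group) (x y : G) : gmul x (gmul (ginv x) y) = y.
Proof. rewrite gmulA, gmulVr, gmul1l. auto. Qed.
Lemma mulVK (G : group) (x y : G) : gmul (ginv x) (gmul x y) = y.
Proof. rewrite gmulA, gmulVl, gmul1l. auto. Qed.

Ltac gsimp := repeat (rewrite ?inv_mul, ?inv_inv, ?inv_one, <- ?gmulA, ?mulKV, ?mulVK, ?gmulVr, ?gmulVl, ?gmul1l, ?gmul1r).
Ltac gsimpH H := repeat (rewrite ?inv_mul, ?inv_inv, ?inv_one, <- ?gmulA, ?mulKV, ?mulVK, ?gmulVr, ?gmulVl, ?gmul1l, ?gmul1r in H).

Section Eqv.
Variable G : group.
Variable N : G -> Prop.
Hypothesis HN : is_normal_subgroup G N.
Definition eqv (x y : G) := N (gmul (ginv x) y).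

Lemma N1 : N gone. Proof. apply HN. Qed.
Lemma Nmul x y : N x -> N y -> N (gmul x y). Proof. apply HN. Qed.
Lemma Ninv x : N x -> N (ginv x). Proof. apply HN. Qed.
Lemma Nconj g x : N x -> N (gmul (gmul g x) (ginv g)). Proof. apply HN. Qed.
Lemma Nconj' g x : N x -> N (gmul (ginv g) (gmul x g)).
Proof. intro. rewrite gmulA. apply normal_conj'; auto. Qed.

Lemma eqv_refl x : eqv x x. Proof. unfold eqv. rewrite gmulVl. apply N1. Qed.
Lemma eqv_sym x y : eqv x y -> eqv y x.
Proof. unfold eqv. intro H. apply Ninv in H. gsimpH H. gsimp. auto. Qed.
Lemma eqv_trans x y z : eqv x y -> eqv y z -> eqv x z.
Proof. unfold eqv. intros H1 H2. pose proof (Nmul _ _ H1 H2) as H. gsimpH H. gsimp. auto. Qed.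
Lemma eqv_mul x x' y y' : eqv x x' -> eqv y y' -> eqv (gmul x y) (gmul x' y').
Proof.
  unfold eqv. intros H1 H2. pose proof (Nmul _ _ (Nconj' y _ H1) H2) as H. gsimpH H. gsimp. auto.
Qed.
Lemma eqv_conj h x y : eqv x y -> eqv (gmul (gmul h x) (ginv h)) (gmul (gmul h y) (ginv h)).
Proof. intro. apply eqv_mul; [apply eqv_mul|]; auto using eqv_refl. Qed.
Lemma eqv_pow x y n : eqv x y -> eqv (gpow x n) (gpow y n).
Proof. intro. induction n; simpl. apply eqv_refl. apply eqv_mul; auto. Qed.
Lemma eqv_N x y : eqv x y -> N x -> N y.
Proof. unfold eqv. intros H1 H2. pose proof (Nmul _ _ H2 H1) as H. gsimpH H. gsimp. auto. Qed.
Lemma N_eqv1 x : N x -> eqv gone x.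
Proof. unfold eqv. rewrite inv_one, gmul1l. auto. Qed.
Lemma eqv1_N x : eqv gone x -> N x.
Proof. unfold eqv. rewrite inv_one, gmul1l. auto. Qed.
End Eqv.


Section Words.
Variables (I : Type) (A : I -> group) (NA : forall i, A i -> Prop).
Hypothesis HNA : forall i, is_normal_subgroup (A i) (NA i).

Definition rep i (x : A i) : A i :=
  epsilon (inhabits gone) (fun y => NA i (gmul (ginv x) y)).

Lemma rep_spec i x : eqv (A i) (NA i) x (rep i x).
Proof.
  unfold rep, eqv. apply epsilon_spec. exists x. rewrite gmulVl. apply N1; auto.
Qed.

Lemma rep_eq i x y : eqv (A i) (NA i) x y -> rep i x = rep i y.
Proof.
  intro H. unfold rep. f_equal. extensionality z. apply propositional_extensionality.
  split; intro Hz.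
  - apply (eqv_trans _ _ (HNA i) _ x); auto. apply eqv_sym; auto.
  - apply (eqv_trans _ _ (HNA i) _ y); auto.
Qed.

Lemma rep_idem i x : rep i (rep i x) = rep i x.
Proof. apply rep_eq. apply eqv_sym; auto. apply rep_spec. Qed.

Definition L := { i : I & A i }.
Definition lvalid (l : L) := ~ NA (projT1 l) (projT2 l) /\ rep _ (projT2 l) = projT2 l.
Definition hd_ne (i : I) (w : list L) := match w with nil => True | l :: _ => projT1 l <> i end.
Fixpoint valid (w : list L) : Prop :=
  match w with nil => True | l :: w' => lvalid l /\ hd_ne (projT1 l) w' /\ valid w' end.

Definition cons_r i (x : A i) (w : list L) : list L :=
  if excluded_middle_informative (NA i x) then w else existT _ i (rep i x) :: w.

Definition act i (a : A i) (w : list L) : list L :=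
  match w with
  | nil => cons_r i a nil
  | l :: w' => match excluded_middle_informative (projT1 l = i) with
     | left e => cons_r i (gmul a (eq_rect _ A (projT2 l) _ e)) w'
     | right _ => cons_r i a w
     end
  end.

Lemma act_same i a c w : act i a (existT _ i c :: w) = cons_r i (gmul a c) w.
Proof.
  simpl. destruct (excluded_middle_informative (i = i)) as [e|n]; [|congruence].
  replace e with (eq_refl i) by apply proof_irrelevance. reflexivity.
Qed.

Lemma act_hd i a w : hd_ne i w -> act i a w = cons_r i a w.
Proof.
  destruct w as [|l w]; simpl; auto. intro H.
  destruct (excluded_middle_informative (projT1 l = i)); [congruence|auto].
Qed.

Lemma cons_r_in i x w : NA i x -> cons_r i x w = w.
Proof. unfold cons_r. destruct (excluded_middle_informative _); tauto. Qed.
Lemma cons_r_out i x w : ~ NA i x -> cons_r i x w = existT _ i (rep i x) :: w.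
Proof. unfold cons_r. destruct (excluded_middle_informative _); tauto. Qed.

Lemma cons_r_eqv i x y w : eqv (A i) (NA i) x y -> cons_r i x w = cons_r i y w.
Proof.
  intro H. unfold cons_r.
  destruct (excluded_middle_informative (NA i x)) as [h1|h1];
  destruct (excluded_middle_informative (NA i y)) as [h2|h2]; auto.
  - exfalso. apply h2. apply (eqv_N _ _ (HNA i) x); auto.
  - exfalso. apply h1. apply (eqv_N _ _ (HNA i) y); auto. apply eqv_sym; auto.
  - rewrite (rep_eq i x y H). auto.
Qed.

Lemma lvalid_rep i x : ~ NA i x -> lvalid (existT _ i (rep i x)).
Proof.
  intro H. split; simpl.
  - intro H'. apply H. apply (eqv_N _ _ (HNA i) (rep i x)); auto. apply eqv_sym; auto. apply rep_spec.
  - apply rep_idem.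
Qed.

Lemma valid_cons_r i x w : valid w -> hd_ne i w -> valid (cons_r i x w).
Proof.
  intros Hw Hh. unfold cons_r. destruct (excluded_middle_informative _); auto.
  simpl. auto using lvalid_rep.
Qed.

Lemma act_valid i a w : valid w -> valid (act i a w).
Proof.
  intro Hw. destruct w as [|[j c] w'].
  - simpl. apply valid_cons_r; simpl; auto.
  - destruct (excluded_middle_informative (j = i)) as [e|n].
    + subst j. rewrite act_same. destruct Hw as (_&H2&H3). apply valid_cons_r; auto.
    + rewrite act_hd by (simpl; auto). apply valid_cons_r; simpl; auto.
Qed.

Lemma eqvA_left i (a x y : A i) : eqv _ (NA i) x y -> eqv _ (NA i) (gmul a x) (gmul a y).
Proof. intro. apply eqv_mul; auto. apply eqv_refl; auto. Qed.

Lemma act_mul i a b w : valid w -> act i a (act i b w) = act i (gmul a b) w.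
Proof.
  intro Hw.
  assert (Hcase : (exists c w', w = existT _ i c :: w' /\ hd_ne i w' /\ lvalid (existT _ i c)) \/ hd_ne i w).
  { destruct w as [|[j c] w']. right; simpl; auto.
    destruct (excluded_middle_informative (j = i)) as [e|n].
    - subst j. left. exists c, w'. destruct Hw as (?&?&?). auto.
    - right. simpl. auto. }
  destruct Hcase as [(c&w'&->&Hh&Hl)|Hh].
  - rewrite !act_same.
    destruct (excluded_middle_informative (NA i (gmul b c))) as [h|h].
    + rewrite (cons_r_in _ _ _ h). rewrite act_hd by auto. apply cons_r_eqv. unfold eqv. gsimp. auto.
    + rewrite (cons_r_out _ _ _ h). rewrite act_same. apply cons_r_eqv. rewrite <- gmulA. apply eqvA_left.
      apply eqv_sym; auto. apply rep_spec.
  - rewrite !(act_hd i _ w Hh).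
    destruct (excluded_middle_informative (NA i b)) as [h|h].
    + rewrite (cons_r_in _ _ _ h). rewrite act_hd by auto. apply cons_r_eqv. unfold eqv. gsimp. auto.
    + rewrite (cons_r_out _ _ _ h). rewrite act_same. apply cons_r_eqv. apply eqvA_left.
      apply eqv_sym; auto. apply rep_spec.
Qed.

Lemma act_triv i a w : NA i a -> valid w -> act i a w = w.
Proof.
  intros Ha Hw. destruct w as [|[j c] w'].
  - simpl. apply cons_r_in. auto.
  - destruct (excluded_middle_informative (j = i)) as [e|n].
    + subst j. rewrite act_same. destruct Hw as ((Hc1&Hc2)&_&_). simpl in *.
      assert (E : eqv _ (NA i) c (gmul a c)).
      { unfold eqv. apply Nconj'; auto. }
      rewrite <- (cons_r_eqv i c) by auto. rewrite cons_r_out by auto. rewrite Hc2. auto.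
    + rewrite act_hd by (simpl; auto). apply cons_r_in. auto.
Qed.

Lemma act_one i w : valid w -> act i gone w = w.
Proof. apply act_triv. apply N1; auto. Qed.

End Words.


Section Perm.
Variable W : Type.
Record perm := Perm { pf : W -> W; pg : W -> W; pfg : forall x, pf (pg x) = x; pgf : forall x, pg (pf x) = x }.

Lemma perm_ext p q : (forall x, pf p x = pf q x) -> (forall x, pg p x = pg q x) -> p = q.
Proof.
  destruct p as [f1 g1 a1 b1], q as [f2 g2 a2 b2]; simpl. intros E1 E2.
  apply functional_extensionality in E1. apply functional_extensionality in E2. subst.
  f_equal; apply proof_irrelevance.
Qed.

Definition pmul (p q : perm) : perm.
Proof.
  refine (Perm (fun x => pf p (pf q x)) (fun x => pg q (pg p x)) _ _); intro x.
  rewrite pfg, pfg; auto. rewrite pgf, pgf; auto.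
Defined.
Definition pone : perm := Perm (fun x => x) (fun x => x) (fun x => eq_refl) (fun x => eq_refl).
Definition pinv (p : perm) : perm := Perm (pg p) (pf p) (pgf p) (pfg p).

Definition PermG : group.
Proof.
  refine (Group perm pmul pone pinv _ _ _ _ _); intros; apply perm_ext; simpl; intros; auto;
  try apply pgf; try apply pfg.
Defined.
End Perm.

Section Free.
Variables (I : Type) (A : I -> group) (F : group) (iota : forall i, hom (A i) F).
Hypothesis HF : IsFreeProduct A F iota.
Variables (NA : forall i, A i -> Prop).
Hypothesis HNA : forall i, is_normal_subgroup (A i) (NA i).

Definition Wt := { w : list (L I A) | valid I A NA w }.
Definition actW (i : I) (a : A i) (w : Wt) : Wt :=
  exist _ (act I A NA i a (proj1_sig w)) (act_valid I A NA HNA i a _ (proj2_sig w)).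

Lemma actW_mul i a b w : actW i a (actW i b w) = actW i (gmul a b) w.
Proof.
  apply eq_sig_hprop. intros; apply proof_irrelevance. simpl.
  apply act_mul; auto. apply proj2_sig.
Qed.

Lemma actW_one i w : actW i gone w = w.
Proof.
  apply eq_sig_hprop. intros; apply proof_irrelevance. simpl.
  apply act_one; auto. apply proj2_sig.
Qed.

Definition actP (i : I) (a : A i) : perm Wt.
Proof.
  refine (Perm Wt (actW i a) (actW i (ginv a)) _ _); intro w;
  rewrite actW_mul; [rewrite gmulVr|rewrite gmulVl]; apply actW_one.
Defined.

Definition actH i : hom (A i) (PermG Wt).
Proof.
  refine (Hom (A i) (PermG Wt) (actP i) _). intros a b.
  apply perm_ext; simpl; intros; rewrite actW_mul; auto. rewrite inv_mul. auto.
Defined.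

Definition Phi : hom F (PermG Wt) :=
  proj1_sig (constructive_indefinite_description _ (HF (PermG Wt) actH)).
Lemma Phi_iota i a : Phi (iota i a) = actH i a.
Proof.
  unfold Phi. destruct (constructive_indefinite_description _ (HF (PermG Wt) actH)) as [phi Hphi]. simpl. apply (proj1 Hphi).
Qed.

Definition N := normal_closure F (union_image iota NA).
Lemma HN : is_normal_subgroup F N.
Proof. apply ncl_normal. Qed.
Definition eqF := eqv F N.

Fixpoint eval (w : list (L I A)) : F :=
  match w with nil => gone | l :: w' => gmul (iota (projT1 l) (projT2 l)) (eval w') end.

Definition w0 : Wt := exist _ nil Logic.I.

Lemma K1 u : valid I A NA u -> proj1_sig (pf _ (Phi (eval u)) w0) = u.
Proof.
  induction u as [|[i c] u IH]; intro Hu.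
  - simpl. rewrite hom_one. reflexivity.
  - simpl eval. rewrite hom_mul. simpl. rewrite Phi_iota. simpl.
    destruct Hu as ((Hc1&Hc2)&Hh&Hv). simpl in *. rewrite IH by auto.
    rewrite act_hd by auto. rewrite cons_r_out by auto. rewrite Hc2. auto.
Qed.

Lemma K2 x : N x -> forall w, pf _ (Phi x) w = w.
Proof.
  revert x. apply (ncl_min F _ (fun x => forall w, pf _ (Phi x) w = w)).
  - repeat split.
    + intro w. rewrite hom_one. reflexivity.
    + intros x y Hx Hy w. rewrite hom_mul. simpl. rewrite Hy, Hx. auto.
    + intros x Hx w. rewrite hom_inv. simpl.
      transitivity (pg _ (Phi x) (pf _ (Phi x) w)). rewrite Hx. auto. apply pgf.
    + intros g x Hx w. rewrite !hom_mul, hom_inv. simpl. rewrite Hx. apply pfg.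
  - intros s [i [a [Ha ->]]] w. rewrite Phi_iota. simpl.
    apply eq_sig_hprop. intros; apply proof_irrelevance. simpl.
    apply act_triv; auto. apply proj2_sig.
Qed.

Lemma eqF_iota i x y : eqv _ (NA i) x y -> eqF (iota i x) (iota i y).
Proof.
  intro H. unfold eqF, eqv. rewrite <- hom_inv, <- hom_mul. apply ncl_incl.
  exists i, (gmul (ginv x) y). auto.
Qed.

Lemma N_iota i x : NA i x -> N (iota i x).
Proof. intro. apply ncl_incl. exists i, x. auto. Qed.

Lemma eval_cons_r i x w : eqF (eval (cons_r I A NA i x w)) (gmul (iota i x) (eval w)).
Proof.
  unfold cons_r. destruct (excluded_middle_informative _) as [h|h].
  - unfold eqF, eqv. rewrite gmulA. apply normal_conj'. apply HN. apply N_iota; auto.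
  - simpl. apply eqv_mul. apply HN. apply eqF_iota. apply eqv_sym; auto. apply rep_spec; auto.
    apply eqv_refl; apply HN.
Qed.

Lemma E1 i a w : valid I A NA w -> eqF (eval (act I A NA i a w)) (gmul (iota i a) (eval w)).
Proof.
  intro Hw. destruct w as [|[j c] w'].
  - simpl. apply eval_cons_r.
  - destruct (excluded_middle_informative (j = i)) as [e|n].
    + subst j. rewrite act_same. eapply eqv_trans. apply HN. apply eval_cons_r.
      simpl. rewrite hom_mul, gmulA. apply eqv_refl, HN.
    + rewrite act_hd by (simpl; auto). apply eval_cons_r.
Qed.

Lemma E2 g : exists u, valid I A NA u /\ eqF g (eval u).
Proof.
  revert g. apply (gen_ind _ _ _ iota HF).
  - exists nil. split. simpl; auto. apply eqv_refl, HN.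
  - intros i a x [u [Hu Hx]]. exists (act I A NA i a u). split. apply act_valid; auto.
    eapply eqv_trans. apply HN. 2: { apply eqv_sym. apply HN. apply E1; auto. }
    apply eqv_mul. apply HN. apply eqv_refl, HN. auto.
Qed.


Lemma eval_app u v : eval (u ++ v) = gmul (eval u) (eval v).
Proof. induction u; simpl. rewrite gmul1l; auto. rewrite IHu, gmulA. auto. Qed.

Fixpoint repw (n : nat) (u : list (L I A)) := match n with 0 => nil | S m => u ++ repw m u end.

Lemma eval_rep n u : eval (repw n u) = gpow (eval u) n.
Proof. induction n; simpl; auto. rewrite eval_app, IHn. auto. Qed.

Fixpoint junc (u v : list (L I A)) : Prop :=
  match u with nil => True | l :: u' => match u' with nil => hd_ne I A (projT1 l) v | _ => junc u' v end end.

Lemma junc_cons a u v : u <> nil -> junc (a :: u) v = junc u v.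
Proof. destruct u; simpl; congruence. Qed.

Lemma junc_last x l' v : junc (x ++ l' :: nil) v = hd_ne I A (projT1 l') v.
Proof.
  induction x; simpl; auto. rewrite <- IHx. destruct (x ++ l' :: nil) eqn:E; auto.
  destruct x; discriminate.
Qed.

Lemma valid_app u v : valid I A NA u -> valid I A NA v -> junc u v -> valid I A NA (u ++ v).
Proof.
  induction u as [|l u IH]; simpl; auto. intros (H1&H2&H3) Hv Hj.
  destruct u as [|l2 u].
  - simpl. auto.
  - simpl in *. split; [auto|split; [auto|apply IH; auto]].
Qed.

Lemma valid_app_inv u v : valid I A NA (u ++ v) -> valid I A NA u /\ valid I A NA v /\ junc u v.
Proof.
  induction u as [|l u IH]; simpl; auto. intros (H1&H2&H3).
  destruct (IH H3) as (?&?&?). destruct u as [|l2 u].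
  - simpl in *. auto.
  - simpl in *. auto.
Qed.

Lemma junc_nil u : junc u nil.
Proof. induction u as [|l u IH]; simpl; auto. destruct u; simpl; auto. Qed.

Lemma valid_rep l u2 l' : valid I A NA ((l :: u2) ++ l' :: nil) -> projT1 l <> projT1 l' ->
  forall m, valid I A NA (repw m ((l :: u2) ++ l' :: nil)).
Proof.
  intros Hu Hne. induction m. exact Logic.I.
  change (valid I A NA (((l :: u2) ++ l' :: nil) ++ repw m ((l :: u2) ++ l' :: nil))).
  apply valid_app; auto. rewrite junc_last. destruct m; simpl; auto.
Qed.

Definition concl (g : F) := N g \/ exists i (a : A i) h m, 0 < m /\ NA i (gpow a m) /\
  eqF g (gmul (gmul h (iota i a)) (ginv h)).

Lemma concl_conj h g : concl (gmul (gmul h g) (ginv h)) -> concl g.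
Proof.
  intros [H|(i&a&h'&m&Hm&Ha&H)].
  - left. pose proof (normal_conj' F N HN h _ H) as H'. gsimpH H'. auto.
  - right. exists i, a, (gmul (ginv h) h'), m. split; auto. split; auto.
    pose proof (eqv_conj F N HN (ginv h) _ _ H) as H'. unfold eqF in *. gsimpH H'. gsimp. auto.
Qed.

Lemma nil_case g : eqF g gone -> concl g.
Proof.
  intro H. left. unfold eqF, eqv in H. rewrite gmul1r in H. apply (Ninv F N HN) in H.
  rewrite inv_inv in H. auto.
Qed.

Lemma main_ind k : forall u g n, valid I A NA u -> length u <= k -> eqF g (eval u) -> 0 < n ->
  N (gpow g n) -> concl g.
Proof.
  induction k as [|k IH]; intros u g n Hu Hl Hg Hn HgN.
  - destruct u; [|simpl in Hl; lia]. apply nil_case; auto.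
  - assert (HuN : N (eval (repw n u))).
    { rewrite eval_rep. eapply eqv_N. apply HN. apply eqv_pow. apply HN. eauto. auto. }
    pose proof (K2 _ HuN w0) as Hw.
    destruct u as [|l [|l2 u3]].
    + apply nil_case; auto.
    + destruct l as [i c]. simpl in Hg. rewrite gmul1r in Hg.
      right. exists i, c, gone, n. split; auto. split.
      * assert (HcN : N (iota i (gpow c n))).
        { rewrite hom_pow. eapply eqv_N. apply HN. apply eqv_pow. apply HN. eauto. auto. }
        pose proof (K2 _ HcN w0) as Hw2. clear -Hw2 HNA.
        rewrite Phi_iota in Hw2. simpl in Hw2.
        apply (f_equal (@proj1_sig _ _)) in Hw2. simpl in Hw2.
        unfold cons_r in Hw2. destruct (excluded_middle_informative _); auto. discriminate.
      * rewrite inv_one, gmul1l, gmul1r. auto.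
    + destruct (exists_last (l:=l2 :: u3) ltac:(discriminate)) as [u2 [l' E]].
      rewrite E in *. rewrite app_comm_cons in *.
      destruct (excluded_middle_informative (projT1 l' = projT1 l)) as [e|ne].
      * destruct l as [i c], l' as [j d]. simpl in e. subst j.
        pose proof Hu as Hu'. apply valid_app_inv in Hu' as (Hv1&Hv2&Hj).
        destruct Hv1 as (Hl1&Hh1&Hv1).
        assert (Hu2 : u2 <> nil).
        { intro. subst u2. simpl in Hj. apply Hj. auto. }
        destruct (exists_last Hu2) as [u4 [l4 E4]].
        assert (Hli : projT1 l4 <> i).
        { subst u2. rewrite app_comm_cons, junc_last in Hj. simpl in Hj. auto. }
        set (h := ginv (iota i c)).
        apply concl_conj with (h := h).
        apply (IH (u2 ++ cons_r I A NA i (gmul d c) nil) _ n); auto.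
        -- apply valid_app; auto. apply valid_cons_r; simpl; auto.
           subst u2. rewrite junc_last. unfold cons_r. destruct (excluded_middle_informative _); simpl; auto.
        -- rewrite length_app. simpl in Hl. rewrite length_app in Hl. simpl in Hl.
           unfold cons_r. destruct (excluded_middle_informative _); simpl; lia.
        -- rewrite eval_app.
           apply (eqv_trans F N HN _ (gmul (eval u2) (gmul (iota i d) (iota i c)))).
           ++ replace (gmul (eval u2) (gmul (iota i d) (iota i c))) with
                (gmul (gmul h (eval ((existT (fun i : I => A i) i c :: u2) ++ existT (fun i : I => A i) i d :: nil))) (ginv h)).
              apply (eqv_conj F N HN h _ _ Hg).
              unfold h. rewrite eval_app. simpl. gsimp. auto.
           ++ apply eqv_mul. apply HN. apply eqv_refl, HN.
              apply eqv_sym. apply HN. eapply eqv_trans. apply HN. apply eval_cons_r.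
              simpl. rewrite hom_mul, gmul1r. apply eqv_refl, HN.
        -- rewrite gpow_conj. apply HN. auto.
      * exfalso. destruct n as [|n']; [lia|].
        assert (Hvr : valid I A NA (repw (S n') ((l :: u2) ++ l' :: nil))).
        { apply valid_rep; auto. }
        pose proof (K1 _ Hvr) as HK.
        rewrite Hw in HK. simpl in HK. discriminate HK.
Qed.

End Free.

Lemma torsion I (A : I -> group) F (iota : forall i, hom (A i) F) (HF : IsFreeProduct A F iota)
  NA (HNA : forall i, is_normal_subgroup (A i) (NA i)) g n :
  0 < n -> N I A F iota NA (gpow g n) -> concl I A F iota NA g.
Proof.
  intros Hn Hg. destruct (E2 I A F iota HF NA HNA g) as [u [Hu Hgu]].
  eapply (main_ind I A F iota HF NA HNA (length u) u g n); eauto.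
Qed.

Lemma part1 I (A : I -> group) F (iota : forall i, hom (A i) F) (HF : IsFreeProduct A F iota) j x :
  Tor F j x <-> normal_closure F (union_image iota (fun i => Tor (A i) j)) x.
Proof.
  split.
  - revert x. induction j as [|j IH]; intros x Hx.
    + simpl in Hx. subst. apply ncl_normal.
    + simpl in Hx. revert x Hx. apply ncl_min. apply ncl_normal.
      intros g [n [Hn Hg]]. apply IH in Hg.
      assert (HNA : forall i, is_normal_subgroup (A i) (Tor (A i) j)) by (intro; apply Tor_normal).
      assert (Hsub : forall y, N I A F iota (fun i => Tor (A i) j) y ->
                normal_closure F (union_image iota (fun i => Tor (A i) (S j))) y).
      { apply ncl_min. apply ncl_normal. intros s [i [a [Ha ->]]]. apply ncl_incl.
        exists i, a. split; auto. apply Tor_succ; auto. }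
      destruct (torsion I A F iota HF _ HNA g n Hn Hg) as [H|(i&a&h&m&Hm&Ha&H)].
      * apply Hsub; auto.
      * pose proof (ncl_normal F (union_image iota (fun i => Tor (A i) (S j)))) as HN'.
        assert (Hc : normal_closure F (union_image iota (fun i => Tor (A i) (S j)))
                       (gmul (gmul h (iota i a)) (ginv h))).
        { apply HN'. apply ncl_incl. exists i, a. split; auto. simpl. apply ncl_incl. exists m. auto. }
        unfold eqF, eqv in H. apply Hsub in H. apply (Ninv F _ HN') in H. rewrite inv_mul, inv_inv in H.
        pose proof (Nmul F _ HN' _ _ Hc H) as H'. rewrite mulKV in H'. auto.
  - revert x. apply ncl_min. apply Tor_normal. intros s [i [a [Ha ->]]]. apply Tor_hom. auto.
Qed.

Lemma part1_inf I (A : I -> group) F (iota : forall i, hom (A i) F) (HF : IsFreeProduct A F iota) x :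
  Tor_inf F x <-> normal_closure F (union_image iota (fun i => Tor_inf (A i))) x.
Proof.
  split.
  - intros [j Hj]. apply (part1 I A F iota HF) in Hj. revert x Hj. apply ncl_mono.
    intros s [i [a [Ha ->]]]. exists i, a. split; auto. exists j. auto.
  - revert x. apply ncl_min. apply Tor_inf_normal. intros s [i [a [[j Ha] ->]]].
    exists j. apply Tor_hom. auto.
Qed.

Theorem proposition3p14 (I : Type) (A : I -> group) (F : group)
  (iota : forall i, hom (A i) F) :
  IsFreeProduct A F iota ->
  (forall j : nat, free_product_compat A F iota (fun G => Tor G j)) /\
  free_product_compat A F iota Tor_inf.
Proof.
  intro HF. split.
  - intro j. split.
    + apply part1; auto.
    + apply (part2 I A F iota (fun i => Tor (A i) j) (Tor F j) HF). apply part1; auto.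
  - split.
    + apply part1_inf; auto.
    + apply (part2 I A F iota (fun i => Tor_inf (A i)) (Tor_inf F) HF). apply part1_inf; auto.
Qed.
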